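(* Let $w\ge5$, $t\in[2,w-2]$ and $\tilde h>2w^3$ be integers, and let $n'=\tilde h(w-1)$. Let $\{a_0=0,a_1,\dots,a_{w-2}\}$ be a $(\tilde h,w-1)$ modular Golomb ruler, with each $a_s$ represented by an integer in $[0,\tilde h-1]$. Define vectors in $\{0,1,2\}^{\mathbb Z_{n'}}$ (positions indexed by $\mathbb Z_{n'}$, all arithmetic mod $n'$) as follows. (1) For $i\in[0,t-2]$ and $j\in[0,\tilde h-1]$, $\mathbf a_{i,j}$ has support $\{(a_s+j)(w-1)+i: s\in[0,w-2]\}$, with position $(a_{w-2}+j)(w-1)+i$ having value $2$ and all other support positions value $1$. (2) For $i\in[0,w-t-1]$ and $j\in[0,\tilde h-1]$, $\mathbf b_{i,j}$ has support $\{(si+j)(w-1)+s-1: s\in[1,w-1]\}$, with position $((t+i)i+j)(w-1)+(t+i-1)$ having value $2$ and all other support positions value $1$. Let $\mathcal H=\{\mathbf a_{i,j}\}\cup\{\mathbf b_{i,j}\}$. Then $\mathcal H$ is an $(n',2w-2,w)_3$ code. Moreover, exactly $\tilde h(w-t)$ positions $v\in\mathbb Z_{n'}$ lie in the supports of exactly $w-t$ codewords of $\mathcal H$, and every other position lies in the supports of exactly $2w-t-1$ codewords of $\mathcal H$.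
   Context: An $(m,k)$ modular Golomb ruler is a set of $k$ elements of $\mathbb Z_m$ whose pairwise differences $a_i-a_j$ ($i\ne j$) in $\mathbb Z_m$ are nonzero and pairwise distinct. The $\ell_1$-distance between ternary vectors $u,v$ is $\sum|u_i-v_i|$ and the $\ell_1$-weight of $u$ is its distance to $0$. An $(n,d,w)_3$ code is a set of ternary vectors of length $n$ each of $\ell_1$-weight $w$ with pairwise $\ell_1$-distance at least $d$ (here length $n'$ with positions indexed by $\mathbb Z_{n'}$). *)

(* Defs.v *)
From mathcomp Require Import all_boot all_order all_algebra.
Set Implicit Arguments. Unset Strict Implicit. Unset Printing Implicit Defensive.

Definition modular_golomb (m k : nat) (a : nat -> nat) : Prop :=
  (forall i j, i < k -> j < k -> i != j ->
     ~ ((a i)%:Z - (a j)%:Z = 0 %[mod m%:Z])%Z) /\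
  (forall i j i' j', i < k -> j < k -> i' < k -> j' < k -> i != j -> i' != j' ->
     ((a i)%:Z - (a j)%:Z = (a i')%:Z - (a j')%:Z %[mod m%:Z])%Z ->
     i = i' /\ j = j').

(* ternary vectors with positions indexed by Z_n (represented by 'I_n) *)
Definition tvec (n : nat) := {ffun 'I_n -> 'I_3}.

Definition two3 : 'I_3 := @Ordinal 3 2 isT.
Definition one3 : 'I_3 := @Ordinal 3 1 isT.
Definition zero3 : 'I_3 := @Ordinal 3 0 isT.

Definition mkvec (n : nat) (supp : seq nat) (p2 : nat) : tvec n :=
  [ffun v : 'I_n => if (v : nat) == p2 %% n then two3
                    else if has (fun x => x %% n == v) supp then one3 else zero3].

Definition l1dist (n : nat) (u v : tvec n) : nat :=
  \sum_(x : 'I_n) ((u x - v x) + (v x - u x))%N.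

Definition l1weight (n : nat) (u : tvec n) : nat := \sum_(x : 'I_n) (u x : nat).

Definition is_code (n d w : nat) (C : {set tvec n}) : Prop :=
  (forall c, c \in C -> l1weight c = w) /\
  (forall c c', c \in C -> c' \in C -> c != c' -> d <= l1dist c c').

Definition supp_count (n : nat) (C : {set tvec n}) (v : 'I_n) : nat :=
  #|[set c in C | c v != zero3]|.

Definition vecA (n w : nat) (a : nat -> nat) (i j : nat) : tvec n :=
  mkvec n [seq (a s + j) * (w - 1) + i | s <- iota 0 (w - 1)]
          ((a (w - 2) + j) * (w - 1) + i).

Definition vecB (n w t : nat) (i j : nat) : tvec n :=
  mkvec n [seq (s * i + j) * (w - 1) + (s - 1) | s <- iota 1 (w - 1)]
          (((t + i) * i + j) * (w - 1) + (t + i - 1)).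

Definition codeH (w t h : nat) (a : nat -> nat) : {set tvec (h * (w - 1))} :=
  [set vecA (h * (w - 1)) w a i j | i : 'I_(t - 1), j : 'I_h] :|:
  [set vecB (h * (w - 1)) w t i j | i : 'I_(w - t), j : 'I_h].

(* Main.v *)
Require Import Defs.
From mathcomp Require Import all_boot all_order all_algebra zify ring.
Import GRing.Theory Num.Theory.
Set Implicit Arguments. Unset Strict Implicit.

Lemma NT1 (h x y : nat) : x %% h = y %% h -> (h%:Z %| (x%:Z - y%:Z)%R)%Z.
Proof. move=> E. rewrite -eqz_mod_dvd. by rewrite !modz_nat E. Qed.

Lemma qr_inj (W Q R Q' R' : nat) : R < W -> R' < W -> Q * W + R = Q' * W + R' -> Q = Q' /\ R = R'.
Proof.
move=> hR hR' E.
have W0 : 0 < W by case: W hR {hR' E}.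
have := congr1 (modn^~ W) E; rewrite /= !modnMDl !modn_small // => eR.
have := congr1 (divn^~ W) E; rewrite /= !divnMDl // !divn_small // !addn0 => eQ.
by [].
Qed.

Lemma decomp (W Q R x : nat) : R < W -> (Q * W + R == x) = (Q == x %/ W) && (R == x %% W).
Proof.
move=> hR. have W0 : 0 < W by case: W hR.
apply/eqP/andP => [E|[/eqP -> /eqP ->]]; last by rewrite -divn_eq.
have := qr_inj hR (ltn_pmod x W0) (etrans E (divn_eq x W)).
by case=> -> ->.
Qed.

Lemma modW (h W x r : nat) : 0 < h -> r < W -> (x * W + r) %% (h * W) = (x %% h) * W + r.
Proof.
move=> h0 hr.
rewrite {1}(divn_eq x h) mulnDl -(mulnA (x %/ h)) -addnA modnMDl modn_small //.
have := ltn_pmod x h0. nia.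
Qed.

Lemma addmod_inj (h c j j' : nat) : j < h -> j' < h -> (c + j) %% h = (c + j') %% h -> j = j'.
Proof. move=> hj hj' /eqP; rewrite eqn_modDl !modn_small //; by move/eqP. Qed.

Lemma mkvecE n supp p2 (x : 'I_n) :
  (mkvec n supp p2 x : nat) =
  if val x == p2 %% n then 2 else if val x \in map (modn^~ n) supp then 1 else 0.
Proof.
rewrite ffunE.
have -> : has (fun y => y %% n == x) supp = (val x \in map (modn^~ n) supp).
  apply/hasP/mapP => [[y Hy /eqP E]|[y Hy E]]; exists y => //; apply/eqP; by rewrite E.
by case: ifP => //; case: ifP.
Qed.

Lemma mkvec_nat n supp p2 (x : 'I_n) :
  p2 %% n \in map (modn^~ n) supp ->
  (mkvec n supp p2 x : nat) = (val x \in map (modn^~ n) supp) + (val x == p2 %% n).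
Proof.
move=> H; rewrite mkvecE; have [E|NE] := eqVneq (val x) (p2 %% n).
  by rewrite E H.
by rewrite addn0; case: (_ \in _).
Qed.

Lemma sum_count n (P : pred nat) : \sum_(x < n) (P x : nat) = count P (iota 0 n).
Proof.
rewrite -(big_mkord xpredT (fun k => (P k : nat))) /index_iota subn0.
by elim: (iota 0 n) => [|y s IH]; rewrite ?big_nil ?big_cons //= IH.
Qed.

Lemma sum_count_seq (T : Type) (l : seq T) (P : pred T) : \sum_(x <- l) (P x : nat) = count P l.
Proof. by elim: l => [|y s IH]; rewrite ?big_nil ?big_cons //= IH. Qed.

Lemma count_iota_mem n S : uniq S -> all (fun k => k < n) S ->
  count (fun k => k \in S) (iota 0 n) = size S.
Proof.
move=> uS aS. rewrite -size_filter. apply: perm_size.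
apply: uniq_perm; [by rewrite filter_uniq ?iota_uniq | done | move=> k].
rewrite mem_filter mem_iota /= add0n.
case kS: (k \in S) => //=. by move/allP: aS => /(_ k kS).
Qed.

Lemma count_one n m : m < n -> count (fun k => k == m) (iota 0 n) = 1.
Proof.
move=> hm. have := count_uniq_mem m (iota_uniq 0 n).
rewrite mem_iota add0n hm /= => <-. by apply: eq_count => k.
Qed.

Lemma weight_mkvec n supp p2 : 0 < n -> uniq (map (modn^~ n) supp) ->
  p2 %% n \in map (modn^~ n) supp -> l1weight (mkvec n supp p2) = (size supp).+1.
Proof.
move=> n0 u H. rewrite /l1weight.
under eq_bigr do rewrite mkvec_nat //.
rewrite big_split /=.
rewrite (sum_count n (fun k => k \in map (modn^~ n) supp)).
rewrite (sum_count n (fun k => k == p2 %% n)).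
rewrite count_iota_mem //; last by apply/allP => k /mapP [y _ ->]; rewrite ltn_pmod.
by rewrite count_one ?ltn_pmod // size_map addn1.
Qed.

Lemma dist_min n (u v : tvec n) :
  l1dist u v + 2 * \sum_(x < n) minn (u x) (v x) = l1weight u + l1weight v.
Proof.
rewrite /l1dist /l1weight big_distrr -!big_split /=.
apply: eq_bigr => x _. lia.
Qed.

Lemma mem_count (T : eqType) (U : eqType) (g : T -> U) (l : seq T) (x : U) :
  uniq (map g l) -> (x \in map g l : nat) = count (fun s => g s == x) l.
Proof.
move=> u. rewrite -count_uniq_mem // count_map. apply: eq_count => s /=. by rewrite eq_sym.
Qed.

Lemma count_le1 (T : eqType) (P : pred T) (l : seq T) :
  (forall x y, P x -> P y -> x = y) -> uniq l -> count P l <= 1.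
Proof.
move=> H; elim: l => [|y l IH] //= /andP [yl ul].
case Py: (P y) => /=; last by rewrite add0n IH.
suff -> : count P l = 0 by [].
rewrite (eq_in_count (a2 := fun z => z == y)).
  apply/eqP; rewrite eqn0Ngt -has_count; apply/hasP => [[z zl /eqP zy]].
  by move: yl; rewrite -zy zl.
move=> z zl /=. apply/idP/eqP => [Pz|->//]. exact: H.
Qed.


Record good (w t h : nat) (a : nat -> nat) : Prop := Good {
 g_w : 5 <= w; g_t : 2 <= t; g_tw : t <= w - 2; g_h : 2 * w ^ 3 < h;
 g_gol : modular_golomb h (w-1) a; g_a : forall s, s <= w - 2 -> a s < h }.

Definition PT (w t h : nat) := (('I_(t-1) * 'I_h) + ('I_(w-t) * 'I_h))%type.

Definition suppof w t h a (p : PT w t h) : seq nat :=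
  match p with
  | inl q => [seq (a s + q.2) * (w - 1) + q.1 | s <- iota 0 (w - 1)]
  | inr q => [seq (s * q.1 + q.2) * (w - 1) + (s - 1) | s <- iota 1 (w - 1)]
  end.
Definition p2of w t h a (p : PT w t h) : nat :=
  match p with
  | inl q => (a (w - 2) + q.2) * (w - 1) + q.1
  | inr q => ((t + q.1) * q.1 + q.2) * (w - 1) + (t + q.1 - 1)
  end.
Definition Fp w t h a (p : PT w t h) : tvec (h * (w - 1)) :=
  mkvec (h * (w - 1)) (suppof a p) (p2of a p).

Definition Sp w t h a (p : PT w t h) : seq nat :=
  match p with
  | inl q => [seq ((a s + q.2) %% h) * (w - 1) + q.1 | s <- iota 0 (w - 1)]
  | inr q => [seq ((s * q.1 + q.2) %% h) * (w - 1) + (s - 1) | s <- iota 1 (w - 1)]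
  end.
Definition P2 w t h a (p : PT w t h) : nat :=
  match p with
  | inl q => ((a (w - 2) + q.2) %% h) * (w - 1) + q.1
  | inr q => (((t + q.1) * q.1 + q.2) %% h) * (w - 1) + (t + q.1 - 1)
  end.




Lemma good_h0 w t h a : good w t h a -> 0 < h.
Proof. case=> *. lia. Qed.

Lemma a_inj w t h a (G : good w t h a) s s' : s < w - 1 -> s' < w - 1 -> a s = a s' -> s = s'.
Proof.
move=> hs hs' E. case: (g_gol G) => G1 _.
apply/eqP; apply: contraT => ne. exfalso; apply: (G1 s s') => //.
by rewrite E subrr.
Qed.

Lemma map_supp w t h a (G : good w t h a) (p : PT w t h) :
  map (modn^~ (h * (w - 1))) (suppof a p) = Sp a p.
Proof.
have h0 := good_h0 G. have hw := g_w G. have ht := g_t G. have htw := g_tw G.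
case: p => [[i j]|[i j]] /=; rewrite -map_comp.
  apply: eq_map => s /=. apply: modW => //. have := ltn_ord i. lia.
apply/eq_in_map => s /=. rewrite mem_iota => /andP [s1 s2]. apply: modW => //. lia.
Qed.

Lemma mod_p2 w t h a (G : good w t h a) (p : PT w t h) :
  p2of a p %% (h * (w - 1)) = P2 a p.
Proof.
have h0 := good_h0 G. have hw := g_w G. have ht := g_t G. have htw := g_tw G.
case: p => [[i j]|[i j]] /=; apply: modW => //.
  have := ltn_ord i. lia.
have := ltn_ord i. lia.
Qed.

Lemma P2_in w t h a (G : good w t h a) (p : PT w t h) : P2 a p \in Sp a p.
Proof.
have h0 := good_h0 G. have hw := g_w G. have ht := g_t G. have htw := g_tw G.
case: p => [[i j]|[i j]] /=.
  apply/mapP; exists (w - 2) => //. rewrite mem_iota. lia.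
apply/mapP; exists (t + i) => //. rewrite mem_iota. have := ltn_ord i. lia.
Qed.

Lemma Sp_uniq w t h a (G : good w t h a) (p : PT w t h) : uniq (Sp a p).
Proof.
have h0 := good_h0 G. have hw := g_w G. have ht := g_t G. have htw := g_tw G.
case: p => [[i j]|[i j]] /=; rewrite map_inj_in_uniq ?iota_uniq //.
  have hi : (i : nat) < w - 1 by have := ltn_ord i; lia.
  move=> s s'; rewrite !mem_iota => /andP [_ hs] /andP [_ hs'] E.
  have [E1 _] := qr_inj hi hi E.
  apply: (a_inj G); [lia|lia|].
  have E2 : (j + a s) %% h = (j + a s') %% h by rewrite addnC E1 addnC.
  apply: (addmod_inj _ _ E2); apply: (g_a G); lia.
move=> s s'; rewrite !mem_iota => /andP [hs1 hs] /andP [hs1' hs'] E.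
have hx : s - 1 < w - 1 by lia.
have hy : s' - 1 < w - 1 by lia.
have [_ E2] := qr_inj hx hy E.
lia.
Qed.

Lemma F_nat w t h a (G : good w t h a) (p : PT w t h) (x : 'I_(h * (w - 1))) :
  (Fp a p x : nat) = (val x \in Sp a p) + (val x == P2 a p).
Proof.
rewrite /Fp mkvec_nat map_supp // mod_p2 //. exact: P2_in.
Qed.

Lemma weight_F w t h a (G : good w t h a) (p : PT w t h) : l1weight (Fp a p) = w.
Proof.
have h0 := good_h0 G. have hw := g_w G.
rewrite /Fp weight_mkvec ?map_supp ?mod_p2 ?P2_in ?Sp_uniq //; last first.
  rewrite muln_gt0 h0 /=. lia.
case: p => [[i j]|[i j]] /=; rewrite size_map size_iota; lia.
Qed.


Lemma Sp_lt w t h a (G : good w t h a) (p : PT w t h) x : x \in Sp a p -> x < h * (w - 1).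
Proof.
rewrite -(map_supp G) => /mapP [y _ ->]. rewrite ltn_pmod // muln_gt0 (good_h0 G) /=.
have := g_w G. lia.
Qed.

Lemma P2_inj w t h a (G : good w t h a) (p p' : PT w t h) : P2 a p = P2 a p' -> p = p'.
Proof.
have h0 := good_h0 G. have hw := g_w G. have ht := g_t G. have htw := g_tw G.
case: p => [[i j]|[i j]]; case: p' => [[i' j']|[i' j']] /= E.
- have hi : (i : nat) < w - 1 by have := ltn_ord i; lia.
  have hi' : (i' : nat) < w - 1 by have := ltn_ord i'; lia.
  have [E1 E2] := qr_inj hi hi' E.
  have Ej := addmod_inj (ltn_ord j) (ltn_ord j') E1.
  by rewrite (val_inj E2) (val_inj Ej).
- have hi : (i : nat) < w - 1 by have := ltn_ord i; lia.
  have hi' : t + i' - 1 < w - 1 by have := ltn_ord i'; lia.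
  have [_ E2] := qr_inj hi hi' E. have := ltn_ord i. lia.
- have hi' : (i' : nat) < w - 1 by have := ltn_ord i'; lia.
  have hi : t + i - 1 < w - 1 by have := ltn_ord i; lia.
  have [_ E2] := qr_inj hi hi' E. have := ltn_ord i'. lia.
- have hi : t + i - 1 < w - 1 by have := ltn_ord i; lia.
  have hi' : t + i' - 1 < w - 1 by have := ltn_ord i'; lia.
  have [E1 E2] := qr_inj hi hi' E.
  have Ei : (i : nat) = i' by lia.
  rewrite Ei in E1.
  have Ej := addmod_inj (ltn_ord j) (ltn_ord j') E1.
  by rewrite (val_inj Ei) (val_inj Ej).
Qed.

Lemma F_inj w t h a (G : good w t h a) : injective (@Fp w t h a).
Proof.
move=> p p' E. apply: (P2_inj G).
pose x := Ordinal (Sp_lt G (P2_in G p)).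
have := F_nat G p x; have := F_nat G p' x. rewrite E /= => ->.
rewrite (P2_in G p) eqxx /=.
case: (P2 a p \in Sp a p'); case: eqP => //.
Qed.

Lemma codeH_eq w t h a (G : good w t h a) : codeH w t h a = @Fp w t h a @: setT.
Proof.
apply/setP => c; apply/idP/idP.
  case/setUP => /imset2P [i j _ _ ->].
    by apply/imsetP; exists (inl (i, j)).
  by apply/imsetP; exists (inr (i, j)).
case/imsetP => [[[i j]|[i j]] _ ->]; apply/setUP.
  by left; apply: imset2_f.
by right; apply: imset2_f.
Qed.


Lemma memA w t h a (i : 'I_(t-1)) (j : 'I_h) x :
  x \in Sp a (inl (i, j) : PT w t h) -> exists2 s, s < w - 1 & x = ((a s + j) %% h) * (w - 1) + i.
Proof. case/mapP => s; rewrite mem_iota => /andP [_ hs] ->. by exists s. Qed.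

Lemma memB w t h a (i : 'I_(w-t)) (j : 'I_h) x :
  x \in Sp a (inr (i, j) : PT w t h) ->
  exists s, [/\ 1 <= s, s <= w - 1 & x = ((s * i + j) %% h) * (w - 1) + (s - 1)].
Proof. case/mapP => s; rewrite mem_iota => /andP [h1 h2] ->. by exists s; split => //. Qed.

Lemma idA (x1 x2 x3 x4 j j' : nat) :
 (((x1 + j)%N%:Z - (x2 + j')%N%:Z) - ((x3 + j)%N%:Z - (x4 + j')%N%:Z) =
   ((x1)%:Z - (x2)%:Z) - ((x3)%:Z - (x4)%:Z))%R.
Proof. lia. Qed.

Lemma idB (s1 s3 i i' j j' : nat) :
 (((s1 * i + j)%N%:Z - (s1 * i' + j')%N%:Z) - ((s3 * i + j)%N%:Z - (s3 * i' + j')%N%:Z) =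
   ((s1%:Z - s3%:Z) * (i%:Z - i'%:Z)))%R.
Proof. rewrite !PoszD !PoszM. ring. Qed.

Lemma kbound (h w sx sy i i' : nat) (k : int) : w * w < h -> sx <= w -> sy <= w -> i < w -> i' < w ->
  ((sx%:Z - sy%:Z) * (i%:Z - i'%:Z) = k * h%:Z)%R -> sx = sy \/ i = i'.
Proof.
move=> *. have : (k = 0 \/ 1 <= k \/ k <= -1)%R by lia. case=> [|[]] H; nia.
Qed.

Lemma commonAB w t h a (G : good w t h a) (i : 'I_(t-1)) (i' : 'I_(w-t)) (j j' : 'I_h) x y :
  x \in Sp a (inl (i, j) : PT w t h) -> x \in Sp a (inr (i', j') : PT w t h) ->
  y \in Sp a (inl (i, j) : PT w t h) -> y \in Sp a (inr (i', j') : PT w t h) -> x = y.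
Proof.
have hw := g_w G. have ht := g_t G. have htw := g_tw G.
have hi : (i : nat) < w - 1 by have := ltn_ord i; lia.
case/memA => s1 hs1 ->; case/memB => s2 [h21 h22 E1].
case/memA => s3 hs3 ->; case/memB => s4 [h41 h42 E2].
have h2 : s2 - 1 < w - 1 by clear E1 E2; lia.
have h4 : s4 - 1 < w - 1 by clear E1 E2; lia.
have [Q1 R1] := qr_inj hi h2 E1.
have [Q2 R2] := qr_inj hi h4 E2.
have es : s2 = s4 by clear E1 E2 Q1 Q2; lia.
by rewrite Q1 Q2 es.
Qed.

Lemma commonAA w t h a (G : good w t h a) (i i' : 'I_(t-1)) (j j' : 'I_h) x y :
  ((i : nat) != i') || ((j : nat) != j') ->
  x \in Sp a (inl (i, j) : PT w t h) -> x \in Sp a (inl (i', j') : PT w t h) ->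
  y \in Sp a (inl (i, j) : PT w t h) -> y \in Sp a (inl (i', j') : PT w t h) -> x = y.
Proof.
have hw := g_w G. have ht := g_t G. have htw := g_tw G.
have hi : (i : nat) < w - 1 by have := ltn_ord i; lia.
have hi' : (i' : nat) < w - 1 by have := ltn_ord i'; lia.
move=> hne.
case/memA => s1 hs1 ->; case/memA => s2 hs2 E1.
case/memA => s3 hs3 ->; case/memA => s4 hs4 E2.
have [Q1 R1] := qr_inj hi hi' E1.
have [Q2 _] := qr_inj hi hi' E2.
have jne : (j : nat) != j' by move: hne; rewrite R1 eqxx.
have ne12 : s1 != s2.
  apply/eqP => e; move: Q1; rewrite e => /addmod_inj -/(_ (ltn_ord j) (ltn_ord j')) ej.
  by rewrite ej eqxx in jne.
have ne34 : s3 != s4.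
  apply/eqP => e; move: Q2; rewrite e => /addmod_inj -/(_ (ltn_ord j) (ltn_ord j')) ej.
  by rewrite ej eqxx in jne.
case: (g_gol G) => _ G2.
suff Gc : ((a s1)%:Z - (a s2)%:Z = (a s3)%:Z - (a s4)%:Z %[mod h%:Z])%Z.
  by have [-> _] := G2 s1 s2 s3 s4 hs1 hs2 hs3 hs4 ne12 ne34 Gc.
apply/eqP; rewrite eqz_mod_dvd.
have d1 := NT1 Q1. have d2 := NT1 Q2.
have EE := idA (a s1) (a s2) (a s3) (a s4) j j'.
by rewrite -EE rpredB.
Qed.

Lemma commonBB w t h a (G : good w t h a) (i i' : 'I_(w-t)) (j j' : 'I_h) x y :
  ((i : nat) != i') || ((j : nat) != j') ->
  x \in Sp a (inr (i, j) : PT w t h) -> x \in Sp a (inr (i', j') : PT w t h) ->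
  y \in Sp a (inr (i, j) : PT w t h) -> y \in Sp a (inr (i', j') : PT w t h) -> x = y.
Proof.
have hw := g_w G. have ht := g_t G. have htw := g_tw G. have hh := g_h G.
move=> hne.
case/memB => s1 [h11 h12 ->]; case/memB => s2 [h21 h22 E1].
case/memB => s3 [h31 h32 ->]; case/memB => s4 [h41 h42 E2].
have h1 : s1 - 1 < w - 1 by clear E1 E2; lia.
have h2 : s2 - 1 < w - 1 by clear E1 E2; lia.
have h3 : s3 - 1 < w - 1 by clear E1 E2; lia.
have h4 : s4 - 1 < w - 1 by clear E1 E2; lia.
have [Q1 R1] := qr_inj h1 h2 E1.
have [Q2 R2] := qr_inj h3 h4 E2.
have e12 : s2 = s1 by clear E1 E2 Q1 Q2; lia.
have e34 : s4 = s3 by clear E1 E2 Q1 Q2; lia.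
rewrite e12 in Q1; rewrite e34 in Q2.
have [e13|ne13] := eqVneq s1 s3; first by rewrite e13.
exfalso.
have d1 := NT1 Q1. have d2 := NT1 Q2.
have d := rpredB d1 d2.
have EE := idB s1 s3 i i' j j'.
rewrite EE in d.
case/dvdzP: d => k Ek.
have hi := ltn_ord i. have hi' := ltn_ord i'.
have : s1 = s3 \/ (i : nat) = i'.
  clear Q1 Q2 d1 d2 E1 E2.
  have ww : w * w < h.
    have e : w ^ 3 = w * (w * w) by rewrite !expnS expn0 muln1.
    have : w * w <= w * (w * w) by rewrite leq_pmull; lia.
    lia.
  apply: (kbound (w := w) ww) Ek; lia.
case=> [e|ei]; first by rewrite e eqxx in ne13.
rewrite ei in Q1.
have ej := addmod_inj (ltn_ord j) (ltn_ord j') Q1.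
by move: hne; rewrite ei ej !eqxx.
Qed.

Lemma common w t h a (G : good w t h a) (p p' : PT w t h) x y : p != p' ->
  x \in Sp a p -> x \in Sp a p' -> y \in Sp a p -> y \in Sp a p' -> x = y.
Proof.
case: p => [[i j]|[i j]]; case: p' => [[i' j']|[i' j']] hne.
- apply: (commonAA G) => //. apply: contraR hne; rewrite negb_or !negbK => /andP [/eqP e1 /eqP e2].
  by rewrite (val_inj e1) (val_inj e2).
- exact: (commonAB G).
- move=> x1 x2 y1 y2. exact: (commonAB G x2 x1 y2 y1).
- apply: (commonBB G) => //. apply: contraR hne; rewrite negb_or !negbK => /andP [/eqP e1 /eqP e2].
  by rewrite (val_inj e1) (val_inj e2).
Qed.


Lemma onej h c q : 0 < h -> q < h -> \sum_(j < h) ((c + j) %% h == q : nat) = 1.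
Proof.
move=> h0 hq.
rewrite (sum_count h (fun j => (c + j) %% h == q)).
set j0 := (q + (h - c %% h)) %% h.
have key : forall d m, m < h -> d * h + m + (q + (h - m)) = d.+1 * h + q.
  move=> d m hm. rewrite mulSn. lia.
have Ej0 : (c + j0) %% h = q.
  by rewrite /j0 modnDmr {1}(divn_eq c h) (key _ _ (ltn_pmod c h0)) modnMDl modn_small.
rewrite (eq_in_count (a2 := fun j => j == j0)) ?count_one ?ltn_pmod //.
move=> j; rewrite mem_iota add0n => /andP [_ hj] /=.
apply/eqP/eqP => [E|->//].
apply: (addmod_inj (h := h) (c := c)) => //; [by rewrite /j0 ltn_pmod | by rewrite E Ej0].
Qed.

Lemma memA_count w t h a (G : good w t h a) (i : 'I_(t-1)) (j : 'I_h) v :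
  (v \in Sp a (inl (i, j) : PT w t h) : nat) =
  count (fun s => ((a s + j) %% h == v %/ (w - 1)) && ((i : nat) == v %% (w - 1))) (iota 0 (w - 1)).
Proof.
have hw := g_w G. have ht := g_t G. have htw := g_tw G.
have hi : (i : nat) < w - 1 by have := ltn_ord i; lia.
have u := Sp_uniq G (inl (i, j) : PT w t h). rewrite /= in u *.
rewrite (mem_count _ u). apply: eq_count => s /=. by rewrite decomp.
Qed.

Lemma memB_count w t h a (G : good w t h a) (i : 'I_(w-t)) (j : 'I_h) v :
  (v \in Sp a (inr (i, j) : PT w t h) : nat) =
  count (fun s => ((s * i + j) %% h == v %/ (w - 1)) && (s - 1 == v %% (w - 1))) (iota 1 (w - 1)).
Proof.
have u := Sp_uniq G (inr (i, j) : PT w t h). rewrite /= in u *.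
rewrite (mem_count _ u). apply: eq_in_count => s /=. rewrite mem_iota => /andP [h1 h2].
rewrite decomp //. lia.
Qed.

Lemma sumA w t h a (G : good w t h a) v : v < h * (w - 1) ->
  \sum_(i < t - 1) \sum_(j < h) (v \in Sp a (inl (i, j) : PT w t h) : nat) =
  (v %% (w - 1) < t - 1) * (w - 1).
Proof.
move=> hv. have h0 := good_h0 G. have hw := g_w G.
have W0 : 0 < w - 1 by lia.
have hq : v %/ (w - 1) < h by rewrite ltn_divLR.
transitivity (\sum_(i < t - 1) ((i : nat) == v %% (w - 1)) * (w - 1)).
  apply: eq_bigr => i _.
  under eq_bigr => j _ do rewrite (memA_count G) -sum_count_seq.
  rewrite exchange_big /=.
  case: eqP => [_|_].
    under eq_bigr => s _ do under eq_bigr => j _ do rewrite andbT.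
    rewrite mul1n.
    under eq_bigr => s _ do rewrite (onej _ h0 hq).
    by rewrite sum1_size size_iota.
  rewrite mul0n big1 // => s _. by rewrite big1 // => j _; rewrite andbF.
rewrite -big_distrl /= (sum_count _ (fun k => k == v %% (w - 1))).
have := count_uniq_mem (v %% (w - 1)) (iota_uniq 0 (t - 1)).
rewrite mem_iota add0n /= => <-. by [].
Qed.

Lemma sumB w t h a (G : good w t h a) v : v < h * (w - 1) ->
  \sum_(i < w - t) \sum_(j < h) (v \in Sp a (inr (i, j) : PT w t h) : nat) = w - t.
Proof.
move=> hv. have h0 := good_h0 G. have hw := g_w G.
have W0 : 0 < w - 1 by lia.
have hq : v %/ (w - 1) < h by rewrite ltn_divLR.
have hr : v %% (w - 1) < w - 1 by rewrite ltn_pmod.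
transitivity (\sum_(i < w - t) 1).
  apply: eq_bigr => i _.
  under eq_bigr => j _ do rewrite (memB_count G) -sum_count_seq.
  rewrite exchange_big /=.
  transitivity (\sum_(s <- iota 1 (w - 1)) (s - 1 == v %% (w - 1) : nat)).
    apply: eq_bigr => s _. case: eqP => [_|_].
      under eq_bigr => j _ do rewrite andbT.
      exact: onej.
    by rewrite big1 // => j _; rewrite andbF.
  rewrite sum_count_seq.
  rewrite (eq_in_count (a2 := fun s => s == (v %% (w - 1)).+1)).
    have := count_uniq_mem (v %% (w - 1)).+1 (iota_uniq 1 (w - 1)).
    rewrite mem_iota /= => E. rewrite -[RHS](_ : true = 1 :> nat) //.
    have -> : true = (0 < (v %% (w - 1)).+1 < 1 + (w - 1)) by rewrite /=; lia.
    by rewrite -E.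
  move=> s; rewrite mem_iota => /andP [h1 _] /=. apply/eqP/eqP; lia.
by rewrite sum_nat_const card_ord muln1.
Qed.


Lemma nz_iff w t h a (G : good w t h a) (p : PT w t h) (v : 'I_(h * (w - 1))) :
  (Fp a p v != zero3) = (val v \in Sp a p).
Proof.
have -> : (Fp a p v != zero3) = ((Fp a p v : nat) != 0) by [].
rewrite (F_nat G). have [E|NE] := eqVneq (val v) (P2 a p).
  by rewrite E (P2_in G).
by rewrite addn0; case: (_ \in _).
Qed.

Lemma supp_count_eq w t h a (G : good w t h a) (v : 'I_(h * (w - 1))) :
  supp_count (codeH w t h a) v = (v %% (w - 1) < t - 1) * (w - 1) + (w - t).
Proof.
rewrite /supp_count (codeH_eq G).
have -> : [set c in @Fp w t h a @: setT | c v != zero3] = @Fp w t h a @: [set p | Fp a p v != zero3].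
  apply/setP => c; rewrite inE; apply/andP/imsetP => [[/imsetP [p _ ->] nz]|[p]].
    by exists p; rewrite // inE.
  rewrite inE => nz ->; split => //; exact: imset_f.
rewrite card_imset; last exact: (F_inj G).
rewrite -sum1_card big_mkcond /=.
under eq_bigr => p _ do rewrite inE (nz_iff G).
rewrite big_sumType /=.
have -> : \sum_(q : 'I_(t - 1) * 'I_h) (val v \in Sp a (inl q : PT w t h) : nat) =
          \sum_(i < t - 1) \sum_(j < h) (val v \in Sp a (inl (i, j) : PT w t h) : nat).
  by rewrite pair_bigA; apply: eq_bigr => [[i j]] _.
have -> : \sum_(q : 'I_(w - t) * 'I_h) (val v \in Sp a (inr q : PT w t h) : nat) =
          \sum_(i < w - t) \sum_(j < h) (val v \in Sp a (inr (i, j) : PT w t h) : nat).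
  by rewrite pair_bigA; apply: eq_bigr => [[i j]] _.
by rewrite (sumA G (ltn_ord v)) (sumB G (ltn_ord v)).
Qed.

Lemma bool_min (al be al' be' : bool) : (be -> al) -> (be' -> al') -> ~~ (be && be') ->
  minn (al + be) (al' + be') <= al && al'.
Proof. by case: al; case: be; case: al'; case: be' => // /(_ isT). Qed.

Lemma min_le w t h a (G : good w t h a) (p p' : PT w t h) (x : 'I_(h * (w - 1))) : p != p' ->
  minn (Fp a p x) (Fp a p' x) <= (val x \in Sp a p) && (val x \in Sp a p').
Proof.
move=> hne. rewrite !(F_nat G). apply: bool_min.
- by move/eqP => ->; apply: P2_in.
- by move/eqP => ->; apply: P2_in.
apply/andP => [[/eqP e1 /eqP e2]]. move/eqP: hne; apply. apply: (P2_inj G). by rewrite -e1 -e2.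
Qed.

Lemma sum_min_le1 w t h a (G : good w t h a) (p p' : PT w t h) : p != p' ->
  \sum_(x < h * (w - 1)) minn (Fp a p x) (Fp a p' x) <= 1.
Proof.
move=> hne. have L := leq_sum (index_enum _) (fun (x : 'I_(h * (w - 1))) (_ : true) => min_le G x hne). apply: (leq_trans L).
rewrite (sum_count _ (fun k => (k \in Sp a p) && (k \in Sp a p'))).
apply: count_le1; last exact: iota_uniq.
move=> x y /andP [x1 x2] /andP [y1 y2]. exact: (common G hne).
Qed.

Lemma is_code_H w t h a (G : good w t h a) : is_code (2 * w - 2) w (codeH w t h a).
Proof.
split.
  move=> c; rewrite (codeH_eq G) => /imsetP [p _ ->]; exact: (weight_F G).
move=> c c'; rewrite (codeH_eq G) => /imsetP [p _ ->] /imsetP [p' _ ->] ne.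
have hne : p != p' by apply: contra ne => /eqP ->.
have := dist_min (Fp a p) (Fp a p'). rewrite !(weight_F G).
have := sum_min_le1 G hne. lia.
Qed.

Lemma count_periodic (W m : nat) (P : pred nat) : 0 < W ->
  count (fun k => P (k %% W)) (iota 0 (m * W)) = m * count P (iota 0 W).
Proof.
move=> W0; elim: m => [|m IH]; first by rewrite mul0n.
rewrite mulSnr iotaD count_cat IH add0n mulSnr; congr (_ + _).
rewrite -[m * W]addn0 iotaDl count_map. apply: eq_in_count => k.
rewrite mem_iota add0n => /andP [_ hk] /=. by rewrite modnMDl modn_small.
Qed.

Lemma count_ge (W c : nat) : c <= W -> count (fun k => c <= k) (iota 0 W) = W - c.
Proof.
move=> hc. rewrite -{1}(subnKC hc) iotaD count_cat add0n.
rewrite (eq_in_count (a1 := fun k => c <= k) (a2 := pred0)); last first.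
  by move=> k; rewrite mem_iota add0n /= => hk; rewrite leqNgt hk.
rewrite count_pred0 add0n.
rewrite (eq_in_count (a1 := fun k => c <= k) (a2 := predT)); last first.
  by move=> k; rewrite mem_iota /= => /andP [hk _].
by rewrite count_predT size_iota.
Qed.

Lemma count_set w t h a (G : good w t h a) :
  #|[set v : 'I_(h * (w - 1)) | supp_count (codeH w t h a) v == w - t]| = h * (w - t).
Proof.
have hw := g_w G. have ht := g_t G. have htw := g_tw G.
have W0 : 0 < w - 1 by lia.
rewrite -sum1_card big_mkcond /=.
transitivity (\sum_(v < h * (w - 1)) (t - 1 <= v %% (w - 1) : nat)).
  apply: eq_bigr => v _; rewrite inE (supp_count_eq G).
  case: ltnP => H /=; rewrite ?mul1n ?mul0n.
    case: eqP => //; lia.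
  by rewrite add0n eqxx.
rewrite (sum_count _ (fun k => t - 1 <= k %% (w - 1))).
rewrite (count_periodic h (fun k => t - 1 <= k) W0) count_ge; last lia.
congr (_ * _). lia.
Qed.

Lemma third w t h a (G : good w t h a) (v : 'I_(h * (w - 1))) :
  supp_count (codeH w t h a) v != w - t -> supp_count (codeH w t h a) v = 2 * w - t - 1.
Proof.
have hw := g_w G. have ht := g_t G. have htw := g_tw G.
rewrite (supp_count_eq G). case: ltnP => _; rewrite ?mul1n ?mul0n ?add0n.
  move=> _; lia.
by rewrite eqxx.
Qed.

Unset Implicit Arguments.

Theorem proposition1 (w t h : nat) (a : nat -> nat) :
  5 <= w -> 2 <= t -> t <= w - 2 -> 2 * w ^ 3 < h ->
  modular_golomb h (w - 1) a -> a 0 = 0 -> (forall s, s <= w - 2 -> a s < h) ->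
  is_code (2 * w - 2) w (codeH w t h a) /\
  #|[set v : 'I_(h * (w - 1)) | supp_count (codeH w t h a) v == w - t]| = h * (w - t) /\
  (forall v : 'I_(h * (w - 1)),
     supp_count (codeH w t h a) v != w - t ->
     supp_count (codeH w t h a) v = 2 * w - t - 1).
Proof.
move=> hw ht htw hh hg a0 ha.
have G : good w t h a by constructor.
split; first exact: is_code_H G.
split; first exact: count_set G.
exact: third G.
Qed.
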